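(* In the resource theory of unital maps on a $d$-dimensional Hilbert space, with the currency $\mathcal C=\{C^k\}_{k=1}^d\cup\{\Omega\}$, $C^k=\{\Pi^k/k\}$, $\mathrm{Val}(C^k)=\log d-\log k$, $\mathrm{Val}(\Omega)=0$, the yield of any specification $V\in S^\Omega$ is $$\mathrm{Yield}(V)=\log d-\max_{\rho\in V^{\mathrm P}}H_0(\rho),$$ where $V^{\mathrm P}$ is the convex hull of $V$.
   Context: $\Omega$ is the set of all density operators on a Hilbert space $\mathcal H$ of dimension $d$ with fixed orthonormal basis $\{\ket i\}_{i=1}^d$; $S^\Omega$ is the set of non-empty subsets of $\Omega$; $\Pi^k=\sum_{i=1}^k\ket i\bra i$. Allowed transformations: $f_{\mathcal E}(V)=\{\mathcal E(\rho):\rho\in V\}$ for unital CPTP maps $\mathcal E$; $V\to W$ iff some unital CPTP $\mathcal E$ has $\mathcal E(\rho)\in W$ for all $\rho\in V$. $\mathrm{Yield}(V)=\sup\{\mathrm{Val}(C):C\in\mathcal C,\ V\to C\}$. $H_0(\rho)=\log\operatorname{rank}(\rho)$; logarithms are base 2. The convex hull $V^{\mathrm P}$ is the set of all finite convex combinations of elements of $V$. *)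

(* Defs.v *)
From HB Require Import structures.
From mathcomp Require Import all_boot all_order all_algebra.
From mathcomp Require Import spectral.
From Stdlib Require Import Reals.
Set Implicit Arguments. Unset Strict Implicit. Unset Printing Implicit Defensive.
Import Order.TTheory GRing.Theory Num.Theory.
Local Open Scope ring_scope.
Local Open Scope sesquilinear_scope.

Section QRT.
Variable C : numClosedFieldType.
Variable d : nat.

Definition psd (A : 'M[C]_d) : Prop :=
  A ^t* = A /\ forall v : 'rV[C]_d, 0 <= (v *m A *m v ^t*) ord0 ord0.

Definition density (rho : 'M[C]_d) : Prop := psd rho /\ \tr rho = 1.

Definition spec (V : 'M[C]_d -> Prop) : Prop :=
  (forall rho, V rho -> density rho) /\ (exists rho, V rho).

(* unital CPTP maps, given in Kraus form E(rho) = sum_i K_i rho K_i^* with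
   sum_i K_i^* K_i = 1 (trace preserving) and sum_i K_i K_i^* = 1 (unital) *)
Definition unital_cptp (E : 'M[C]_d -> 'M[C]_d) : Prop :=
  exists (n : nat) (K : 'I_n -> 'M[C]_d),
    \sum_(i < n) ((K i) ^t* *m K i) = 1%:M /\
    \sum_(i < n) (K i *m (K i) ^t*) = 1%:M /\
    forall rho, E rho = \sum_(i < n) (K i *m rho *m (K i) ^t*).

Definition converts (V W : 'M[C]_d -> Prop) : Prop :=
  exists E, unital_cptp E /\ forall rho, V rho -> W (E rho).

Definition Pi (k : nat) : 'M[C]_d := pid_mx k.

Inductive currency := CurK of nat | CurOmega.

Definition valid_currency (c : currency) : Prop :=
  match c with CurK k => leq 1 k && leq k d | CurOmega => True end.

Definition currency_set (c : currency) : 'M[C]_d -> Prop :=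
  match c with
  | CurK k => fun rho => rho = (k%:R)^-1 *: Pi k
  | CurOmega => density
  end.

Definition conv_hull (V : 'M[C]_d -> Prop) (rho : 'M[C]_d) : Prop :=
  exists (n : nat) (w : 'I_n -> C) (r : 'I_n -> 'M[C]_d),
    (forall i, 0 <= w i) /\ \sum_(i < n) w i = 1 /\
    (forall i, V (r i)) /\ rho = \sum_(i < n) (w i *: r i).
End QRT.

Definition log2 (x : R) : R := Rdiv (ln x) (ln 2).

Definition Val (d : nat) (c : currency) : R :=
  match c with
  | CurK k => Rminus (log2 (INR d)) (log2 (INR k))
  | CurOmega => 0%R
  end.

(* the set whose supremum is Yield(V) *)
Definition yield_set (C : numClosedFieldType) (d : nat) (V : 'M[C]_d -> Prop)
  (y : R) : Prop :=
  exists c, valid_currency d c /\ converts V (@currency_set C d c) /\ y = Val d c.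

Definition H0 (C : numClosedFieldType) (d : nat) (rho : 'M[C]_d) : R :=
  log2 (INR (\rank rho)).

(* Main.v *)
Require Import Defs.
From HB Require Import structures.
From mathcomp Require Import all_boot all_order all_algebra spectral.
Set Implicit Arguments. Unset Strict Implicit. Unset Printing Implicit Defensive.
Import Order.TTheory GRing.Theory Num.Theory.
Local Open Scope ring_scope.
Local Open Scope sesquilinear_scope.

Section Lin.
Variable C : numClosedFieldType.

Lemma tcM m n p (A : 'M[C]_(m,n)) (B : 'M[C]_(n,p)) : (A *m B)^t* = B^t* *m A^t*.
Proof. by rewrite trmx_mul map_mxM. Qed.

Lemma tcD m n (A B : 'M[C]_(m,n)) : (A + B)^t* = A^t* + B^t*.
Proof. by apply/matrixP=> i j; rewrite !mxE rmorphD. Qed.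

Lemma tcZ m n (a : C) (A : 'M[C]_(m,n)) : (a *: A)^t* = a^* *: A^t*.
Proof. by apply/matrixP=> i j; rewrite !mxE rmorphM. Qed.

Lemma tc_delta m n (i : 'I_m) (j : 'I_n) : (delta_mx i j)^t* = delta_mx j i :> 'M[C]_(n,m).
Proof. by apply/matrixP=> k l; rewrite !mxE rmorph_nat andbC. Qed.

Lemma tc1 n : (1%:M : 'M[C]_n)^t* = 1%:M.
Proof. by rewrite trmx1 map_mx1. Qed.

Lemma tc_pid n r : (pid_mx r : 'M[C]_n)^t* = pid_mx r.
Proof. by rewrite tr_pid_mx map_pid_mx. Qed.

Lemma tcK m n (A : 'M[C]_(m,n)) : A^t*^t* = A.
Proof. exact: trmxCK. Qed.

Lemma tc_sum m n I (r : seq I) (F : I -> 'M[C]_(m,n)) :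
  (\sum_(i <- r) F i)^t* = \sum_(i <- r) (F i)^t*.
Proof.
elim: r => [|x r IH]; first by rewrite !big_nil; apply/matrixP=> i j; rewrite !mxE rmorph0.
by rewrite !big_cons tcD IH.
Qed.

Variable d : nat.
Implicit Types A B M : 'M[C]_d.

Lemma psd_conj A (M : 'M[C]_d) : psd A -> psd (M *m A *m M^t*).
Proof.
move=> [hA pA]; split; first by rewrite !tcM tcK hA mulmxA.
move=> v; have := pA (v *m M); by rewrite tcM !mulmxA.
Qed.

Lemma psd_add A B : psd A -> psd B -> psd (A + B).
Proof.
move=> [hA pA] [hB pB]; split; first by rewrite tcD hA hB.
by move=> v; rewrite mulmxDr mulmxDl mxE addr_ge0.
Qed.

Lemma psd_scale (c : C) A : 0 <= c -> psd A -> psd (c *: A).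
Proof.
move=> c0 [hA pA]; split; first by rewrite tcZ hA conj_Creal // ger0_real.
by move=> v; rewrite -scalemxAr -scalemxAl mxE mulr_ge0.
Qed.

Lemma psd0 : psd (0 : 'M[C]_d).
Proof. split; first by apply/matrixP=> i j; rewrite !mxE rmorph0.
by move=> v; rewrite mulmx0 mul0mx mxE. Qed.

Lemma psd_sum I (r : seq I) (F : I -> 'M[C]_d) :
  (forall i, psd (F i)) -> psd (\sum_(i <- r) F i).
Proof.
move=> hF; elim: r => [|x r IH]; first by rewrite big_nil; apply: psd0.
by rewrite big_cons; apply: psd_add.
Qed.

Lemma psd_entry A i : psd A -> 0 <= A i i.
Proof.
move=> [_ pA]; have := pA (delta_mx 0 i).
by rewrite tc_delta -rowE -colE !mxE.
Qed.

Lemma psd_decomp A : psd A ->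
  [/\ spectralmx A \is unitarymx,
      A = (spectralmx A)^t* *m diag_mx (spectral_diag A) *m spectralmx A &
      forall j, 0 <= spectral_diag A 0 j].
Proof.
move=> pA; have U := spectral_unitarymx A.
have nA : A \is normalmx by apply/normalmxP; rewrite pA.1.
have eA : A = (spectralmx A)^t* *m diag_mx (spectral_diag A) *m spectralmx A.
  by rewrite -invmx_unitary //; apply/orthomx_spectralP.
split => // j.
have := psd_entry j (psd_conj (spectralmx A) pA).
move: eA; set P := spectralmx A; set D := spectral_diag A => eA.
have -> : P *m A *m P^t* = diag_mx D.
  by rewrite eA !mulmxA (unitarymxP U) mul1mx mulmxtVK.
by rewrite mxE eqxx mulr1n.
Qed.

Lemma psd_ker A (v : 'rV[C]_d) : psd A -> (v *m A *m v^t*) 0 0 = 0 -> v *m A = 0.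
Proof.
move=> pA; have [U eA D0] := psd_decomp pA.
set P := spectralmx A in U eA *; set D := spectral_diag A in eA D0 *.
set u := v *m P^t*.
have -> : v *m A *m v^t* = u *m diag_mx D *m u^t*.
  by rewrite eA /u tcM tcK !mulmxA.
rewrite mul_mx_diag mxE => h0.
have hterm j : (u 0 j * D 0 j) * (u^t*) j 0 = D 0 j * (u 0 j * (u 0 j)^*).
  by rewrite !mxE mulrAC mulrC mulrA.
pose F j := (\matrix_(i, j) (u i j * D 0 j)) 0 j * (u^t*) j 0.
have nn : forall k, xpredT k -> 0 <= F k.
  by move=> k _; rewrite /F mxE hterm mulr_ge0 // mul_conjC_ge0.
have z j : u 0 j * D 0 j = 0.
  have := psumr_eq0P nn h0 (i:=j) isT.
  rewrite /F mxE hterm => /eqP; rewrite mulf_eq0 mul_conjC_eq0 => /orP[]/eqP->;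
    by rewrite ?mulr0 ?mul0r.
rewrite eA !mulmxA -/u.
suff -> : u *m diag_mx D = 0 by rewrite mul0mx.
by apply/matrixP=> i j; rewrite mul_mx_diag ord1 !mxE; move: (z j); rewrite mxE.
Qed.

End Lin.
Section Rank.
Variable C : numClosedFieldType.
Variable d : nat.

Lemma psd_ker_add (A B : 'M[C]_d) (v : 'rV[C]_d) :
  psd A -> psd B -> v *m (A + B) = 0 -> v *m A = 0.
Proof.
move=> pA pB h; apply: psd_ker => //.
have : (v *m (A + B) *m v^t*) 0 0 = 0 by rewrite h mul0mx mxE.
rewrite mulmxDr mulmxDl mxE => /eqP.
by rewrite paddr_eq0 ?(pA.2 v) ?(pB.2 v) // => /andP[/eqP].
Qed.

Lemma rank_diag_ind (S : {set 'I_d}) :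
  \rank (diag_mx (\row_j ((j \in S)%:R : C))) = #|S|.
Proof.
pose M : 'M[C]_(#|S|, d) := \matrix_(i, j) ((j == enum_val i)%:R).
have MM : M *m M^T = 1%:M.
  apply/matrixP=> i i'; rewrite !mxE.
  rewrite (bigD1 (enum_val i)) //= big1 ?addr0.
    by rewrite !mxE eqxx mul1r (inj_eq enum_val_inj).
  by move=> x /negbTE hx; rewrite !mxE hx mul0r.
have MtM : M^T *m M = diag_mx (\row_j ((j \in S)%:R : C)).
  apply/matrixP=> j j'; rewrite !mxE.
  under eq_bigr do rewrite !mxE.
  rewrite -(big_enum_val (A := mem S) (fun x => (j == x)%:R * (j' == x)%:R)) /=.
  case: (boolP (j \in S)) => jS.
    rewrite (bigD1 j) //= eqxx mul1r big1 ?addr0.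
      by rewrite eq_sym; case: (j == j').
    by move=> x /andP[_ /negbTE]; rewrite eq_sym => ->; rewrite mul0r.
  rewrite big1 ?mul0rn // => x xS.
  have -> : (j == x) = false by apply: contraNF jS => /eqP ->.
  by rewrite mul0r.
apply/eqP; rewrite eqn_leq; apply/andP; split.
  by rewrite -MtM (leq_trans (mxrankM_maxl _ _)) // mxrank_tr rank_leq_row.
have := mxrankM_maxl M M^T; rewrite MM mxrank1 => h.
apply: (leq_trans h).
have <- : M *m diag_mx (\row_j ((j \in S)%:R : C)) = M.
  apply/matrixP=> i j; rewrite mul_mx_diag !mxE.
  case: eqP => [->|_]; last by rewrite mul0r.
  by rewrite enum_valP mulr1.
exact: mxrankM_maxr.
Qed.
End Rank.
Section Rank2.
Variable C : numClosedFieldType.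
Variable d : nat.

Definition suppS (A : 'M[C]_d) : {set 'I_d} := [set j | spectral_diag A 0 j != 0].

Lemma psd_rank (A : 'M[C]_d) : psd A -> \rank A = #|suppS A|.
Proof.
move=> pA; have [U eA D0] := psd_decomp pA.
move: eA; rewrite /suppS; set P := spectralmx A; set D := spectral_diag A => eA.
have eD : P *m A *m P^t* = diag_mx D.
  by rewrite eA !mulmxA (unitarymxP U) mul1mx mulmxtVK.
set I := \row_j ((j \in [set j | D 0 j != 0])%:R : C).
have r1 : \rank A = \rank (diag_mx D).
  apply/eqP; rewrite eqn_leq; apply/andP; split.
    by rewrite {1}eA (leq_trans (mxrankM_maxl _ _)) // mxrankM_maxr.
  by rewrite -eD (leq_trans (mxrankM_maxl _ _)) // mxrankM_maxr.
have e1 : diag_mx D = diag_mx I *m diag_mx D.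
  rewrite mulmx_diag; congr diag_mx; apply/rowP=> j; rewrite !mxE inE.
  by case: eqP => [->|_]; rewrite ?mulr0 ?mul1r.
have e2 : diag_mx I = diag_mx D *m diag_mx (\row_j (D 0 j)^-1).
  rewrite mulmx_diag; congr diag_mx; apply/rowP=> j; rewrite !mxE inE.
  by case: eqP => [->|/eqP h]; rewrite ?mul0r ?mulfV.
rewrite r1 -(@rank_diag_ind C) -/I; apply/eqP; rewrite eqn_leq; apply/andP; split.
  by rewrite e1 mxrankM_maxl.
by rewrite e2 mxrankM_maxl.
Qed.

End Rank2.
From mathcomp Require Import zify.
Section Upper.
Variable C : numClosedFieldType.
Variable d : nat.

Lemma psd1 : psd (1%:M : 'M[C]_d).
Proof.
split; first exact: tc1.
move=> v; rewrite mulmx1 mxE sumr_ge0 // => i _; rewrite !mxE mul_conjC_ge0 //.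
Qed.

Lemma psd_proj (X : 'M[C]_d) : X^t* = X -> X *m X = X -> psd X.
Proof.
move=> h1 h2; have -> : X = X *m 1%:M *m X^t* by rewrite mulmx1 h1 h2.
by apply: psd_conj; apply: psd1.
Qed.

Lemma tr_pid k : (k <= d)%N -> \tr (pid_mx k : 'M[C]_d) = k%:R.
Proof.
move=> kd.
have -> : (pid_mx k : 'M[C]_d) = (pid_mx k : 'M[C]_(d,k)) *m (pid_mx k : 'M[C]_(k,d)).
  by rewrite mul_pid_mx !minnn.
by rewrite mxtrace_mulC mul_pid_mx !minnn (minn_idPr kd) pid_mx_1 mxtrace1.
Qed.

Lemma tr_sum I (r : seq I) (F : I -> 'M[C]_d) : \tr (\sum_(i <- r) F i) = \sum_(i <- r) \tr (F i).
Proof. by elim: r => [|x r IH]; rewrite ?big_nil ?mxtrace0 // !big_cons mxtraceD IH. Qed.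

Lemma upper_rank (rho0 : 'M[C]_d) (k n : nat) (K : 'I_n -> 'M[C]_d) :
  psd rho0 -> (k <= d)%N ->
  \sum_(i < n) ((K i) ^t* *m K i) = 1%:M ->
  \sum_(i < n) (K i *m (K i) ^t*) = 1%:M ->
  \sum_(i < n) (K i *m rho0 *m (K i) ^t*) = (k%:R)^-1 *: pid_mx k ->
  (\rank rho0 <= k)%N.
Proof.
move=> p0 kd hTP hU hE.
have [U e0 D0] := psd_decomp p0.
rewrite psd_rank //; move: e0 D0; rewrite /suppS.
set P := spectralmx rho0; set D := spectral_diag rho0 => e0 D0.
set S := [set j | D 0 j != 0].
have PtP : P^t* *m P = 1%:M by apply: mulmx1C; apply/unitarymxP.
pose Q : 'M[C]_d := copid_mx k.
have hQ : Q^t* = Q.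
  rewrite /Q /copid_mx; apply/matrixP=> i j; rewrite !mxE rmorphB !rmorph_nat.
  case: (i =P j) => [->|/eqP h]; first by rewrite !eqxx.
  have h2 : (nat_of_ord i == nat_of_ord j) = false by apply/negbTE.
  have h3 : (nat_of_ord j == nat_of_ord i) = false by rewrite eq_sym.
  by rewrite h2 h3 eq_sym (negbTE h).
have QQ : Q *m Q = Q by apply: copid_mx_id.
have pQ : psd Q by apply: psd_proj.
have pPi : psd (pid_mx k : 'M[C]_d).
  by apply: psd_proj; [apply: tc_pid | apply: pid_mx_id].
pose X := \sum_(l < n) (K l)^t* *m Q *m K l.
pose X' := \sum_(l < n) (K l)^t* *m pid_mx k *m K l.
have hXX : X + X' = 1%:M.
  rewrite /X /X' -big_split /=; rewrite -hTP; apply: eq_bigr => l _.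
  by rewrite -mulmxDl -mulmxDr /Q /copid_mx subrK mulmx1.
have pX : psd X.
  apply: psd_sum => l; rewrite -{2}[K l]tcK; exact: psd_conj.
have pX' : psd X'.
  apply: psd_sum => l; rewrite -{2}[K l]tcK; exact: psd_conj.
pose N := P *m X *m P^t*.
pose N' := P *m X' *m P^t*.
have pN : psd N by apply: psd_conj.
have pN' : psd N' by apply: psd_conj.
have hNN : N + N' = 1%:M.
  by rewrite /N /N' -mulmxDl -mulmxDr hXX mulmx1 (unitarymxP U).
have Nle1 j : N j j <= 1.
  have := congr1 (fun M : 'M[C]_d => M j j) hNN; rewrite /= mxE [in RHS]mxE eqxx mulr1n => <-.
  by rewrite lerDl psd_entry.
have trN : \tr N = d%:R - k%:R.
  rewrite /N mxtrace_mulC mulmxA PtP mul1mx /X tr_sum.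
  under eq_bigr do rewrite mxtrace_mulC mulmxA.
  rewrite -tr_sum -mulmx_suml hU mul1mx /Q /copid_mx mxtraceD mxtrace1.
  by rewrite linearN /= tr_pid.
have trDN : \tr (diag_mx D *m N) = 0.
  rewrite /N !mulmxA mxtrace_mulC !mulmxA -e0.
  rewrite /X mulmx_sumr tr_sum.
  under eq_bigr do rewrite !mulmxA mxtrace_mulC !mulmxA.
  rewrite -tr_sum -mulmx_suml hE -scalemxAl mul_pid_mx_copid //.
  by rewrite scaler0 mxtrace0.
have hz j : j \in S -> N j j = 0.
  move=> jS.
  have nn : forall i, xpredT i -> 0 <= D 0 i * N i i.
    by move=> i _; rewrite mulr_ge0 // psd_entry.
  have h0 : \sum_i D 0 i * N i i = 0.
    apply: (etrans _ trDN); rewrite /mxtrace; apply: eq_bigr => i _; by rewrite mul_diag_mx [RHS]mxE.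
  have /eqP := psumr_eq0P nn h0 (i := j) isT.
  by rewrite mulf_eq0 => /orP[/eqP hD|/eqP //]; move: jS; rewrite inE hD eqxx.
have hle : d%:R - k%:R <= (#|~: S|%:R : C).
  rewrite -trN /mxtrace (bigID (mem S)) /= big1 ?add0r; last by move=> j; apply: hz.
  rewrite -sum1_card natr_sum [X in X <= _](eq_bigl (fun i => i \in ~: S)); last by move=> i /=; rewrite in_setC.
  by apply: ler_sum => i _; apply: Nle1.
have cS := cardsC S; rewrite card_ord in cS.
move: hle; rewrite -natrB // ler_nat => hle.
rewrite -[#|~: S|]/(#|~: S|) in hle.
by rewrite -(leq_add2r #|~: S|) cS -leq_subLR.
Qed.
End Upper.
Section Delta.
Variable C : numClosedFieldType.
Variable d : nat.

Lemma delta_mulmx (i j : 'I_d) (X : 'M[C]_d) :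
  delta_mx i j *m X = \matrix_(a, c) ((a == i)%:R * X j c).
Proof.
apply/matrixP=> a c; rewrite !mxE (bigD1 j) //= big1 ?addr0.
  by rewrite !mxE eqxx; case: (a == i).
move=> e /negbTE ne; have ne' : (e == j :> 'I_d) = false := ne.
by rewrite !mxE ne' andbF mul0r.
Qed.

Lemma dXd (i j : 'I_d) (X : 'M[C]_d) :
  delta_mx i j *m X *m delta_mx j i = X j j *: delta_mx i i.
Proof.
rewrite delta_mulmx; apply/matrixP=> a c; rewrite !mxE (bigD1 j) //= big1 ?addr0.
  rewrite !mxE eqxx /=.
  by case: (a == i); case: (c == i); rewrite /= ?mulr1 ?mulr0 ?mul0r ?mul1r.
move=> e /negbTE ne; have ne' : (e == j :> 'I_d) = false := ne.
by rewrite !mxE ne' /= mulr0.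
Qed.

Lemma sum_lt (r : nat) : (r <= d)%N -> \sum_(i < d) ((i < r)%N%:R : C) = r%:R.
Proof.
move=> rd; rewrite -(big_mkord xpredT (fun i => ((i < r)%N%:R : C))).
rewrite (big_cat_nat (leq0n r) rd) /=.
rewrite (eq_big_nat _ _ (F2 := fun _ => 1)); last by move=> i /andP[_ ->].
rewrite [X in _ + X](eq_big_nat _ _ (F2 := fun _ => 0)); last first.
  by move=> i /andP[]; rewrite leqNgt => /negbTE ->.
by rewrite [X in _ + X]big1 // addr0 sumr_const_nat subn0.
Qed.

Lemma sum_ge (r : nat) : (r <= d)%N -> \sum_(i < d) ((r <= i)%N%:R : C) = (d - r)%:R.
Proof.
move=> rd; rewrite -(big_mkord xpredT (fun i => ((r <= i)%N%:R : C))).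
rewrite (big_cat_nat (leq0n r) rd) /=.
rewrite (eq_big_nat _ _ (F2 := fun _ => 0)); last first.
  by move=> i /andP[_]; rewrite ltnNge => /negbTE ->.
rewrite [X in _ + X](eq_big_nat _ _ (F2 := fun _ => 1)); last by move=> i /andP[->].
by rewrite [X in X + _]big1 // add0r sumr_const_nat.
Qed.

Lemma pid_diag (r : nat) : (pid_mx r : 'M[C]_d) = \sum_(i < d) (((i < r)%N%:R : C) *: delta_mx i i).
Proof.
have -> : \sum_(i < d) (((i < r)%N%:R : C) *: delta_mx i i) = diag_mx (\row_i ((i < r)%N%:R : C)).
  by rewrite diag_mx_sum_delta; apply: eq_bigr => i _; rewrite mxE.
apply/matrixP=> a b; rewrite !mxE.
case: (a =P b) => [->|/eqP h]; first by rewrite !eqxx.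
have h2 : (nat_of_ord a == nat_of_ord b) = false by apply/negbTE.
by rewrite h2 /= mulr0n.
Qed.

Lemma sum_in (S : {set 'I_d}) : \sum_(j < d) ((j \in S)%:R : C) = #|S|%:R.
Proof.
rewrite -sum1_card natr_sum [RHS]big_mkcond /=; by apply: eq_bigr => j _; case: (j \in S); rewrite ?mulr1n ?mulr0n.
Qed.

Lemma sqrtC_conj (x : C) : 0 <= x -> sqrtC x * (sqrtC x)^* = x.
Proof. by move=> x0; rewrite conj_Creal ?sqrtC_real // -expr2 sqrtCK. Qed.

End Delta.
From mathcomp Require Import ring.
Section Chan.
Variable C : numClosedFieldType.
Variable d : nat.

Lemma sum_notin (S : {set 'I_d}) : \sum_(j < d) ((j \notin S)%:R : C) = (d - #|S|)%:R.
Proof.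
have h : \sum_(j < d) ((j \notin S)%:R : C) + \sum_(j < d) ((j \in S)%:R : C) = d%:R.
  rewrite -big_split /= (eq_bigr (fun _ => 1)); last by move=> j _; case: (j \in S); rewrite /= ?mulr0n ?mulr1n ?addr0 ?add0r.
  by rewrite sumr_const card_ord.
have Sd : (#|S| <= d)%N by rewrite -[d in (_ <= d)%N](card_ord d) max_card.
by rewrite natrB // -h sum_in addrK.
Qed.

Lemma big_pairs (n := #|{: 'I_d * 'I_d}|) (G : 'I_d * 'I_d -> 'M[C]_d) :
  \sum_(l < n) G (enum_val l) = \sum_(i < d) \sum_(j < d) G (i, j).
Proof.
rewrite -(big_enum_val (A := {: 'I_d * 'I_d})) pair_bigA.
by apply: eq_big => [x|[i j] _] //.
Qed.

Lemma sum_delta1 : \sum_(j < d) (delta_mx j j : 'M[C]_d) = 1%:M.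
Proof.
by rewrite -diag_const_mx diag_mx_sum_delta; apply: eq_bigr => j _; rewrite mxE scale1r.
Qed.

Lemma channel (P : 'M[C]_d) (S : {set 'I_d}) : P \is unitarymx ->
  exists n (K : 'I_n -> 'M[C]_d),
    \sum_(i < n) ((K i)^t* *m K i) = 1%:M /\
    \sum_(i < n) (K i *m (K i)^t*) = 1%:M /\
    forall rho, \tr rho = 1 -> (forall j, j \notin S -> (P *m rho *m P^t*) j j = 0) ->
      \sum_(i < n) (K i *m rho *m (K i)^t*) = (#|S|%:R)^-1 *: pid_mx #|S|.
Proof.
move=> U.
have PtP : P^t* *m P = 1%:M by apply: mulmx1C; apply/unitarymxP.
have PPt : P *m P^t* = 1%:M by apply/unitarymxP.
set r := #|S|.
have cS : (r + #|~: S|)%N = d by rewrite cardsC card_ord.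
have rd : (r <= d)%N by rewrite -cS leq_addr.
pose t (i j : 'I_d) : C := (i < r)%N%:R * (j \in S)%:R * (r%:R)^-1
  + (r <= i)%N%:R * (j \notin S)%:R * ((d - r)%:R)^-1.
have t0 i j : 0 <= t i j by rewrite addr_ge0 // !mulr_ge0 // invr_ge0 ler0n.
pose F (p : 'I_d * 'I_d) := sqrtC (t p.1 p.2) *: (delta_mx p.1 p.2 *m P).
exists #|{: 'I_d * 'I_d}|, (fun l => F (enum_val l)).
have FtF i j : (F (i,j))^t* *m F (i,j) = t i j *: (P^t* *m delta_mx j j *m P).
  rewrite /F /= tcZ tcM tc_delta -scalemxAl -scalemxAr scalerA mulrC sqrtC_conj //.
  by rewrite !mulmxA -(mulmxA _ (delta_mx j i)) mul_delta_mx.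
have FFt i j : F (i,j) *m (F (i,j))^t* = t i j *: delta_mx i i.
  rewrite /F /= tcZ tcM tc_delta -scalemxAl -scalemxAr scalerA sqrtC_conj //.
  by rewrite -mulmxA (mulmxA P) PPt mul1mx mul_delta_mx.
have FrF rho i j : F (i,j) *m rho *m (F (i,j))^t* = (t i j * (P *m rho *m P^t*) j j) *: delta_mx i i.
  rewrite /F /= tcZ tcM tc_delta -!scalemxAl -scalemxAr scalerA sqrtC_conj //.
  by rewrite -scalerA -dXd !mulmxA.
have sum_t_j j : \sum_(i < d) t i j = 1.
  rewrite big_split /= -!mulr_suml sum_lt // sum_ge //.
  case: (boolP (j \in S)) => jS /=.
    have r0 : (0 < r)%N by apply/card_gt0P; exists j.
    by rewrite mulr1 mulr0 mul0r addr0 mulfV // pnatr_eq0 -lt0n.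
  have r0 : (0 < d - r)%N.
    have : (0 < #|~: S|)%N by apply/card_gt0P; exists j; rewrite in_setC.
    by lia.
  by rewrite mulr0 mul0r add0r mulr1 mulfV // pnatr_eq0 -lt0n.
have sum_t_i i : \sum_(j < d) t i j = 1.
  rewrite big_split /= -!mulr_suml -!mulr_sumr sum_in sum_notin -/r.
  case: (ltnP i r) => ir /=.
    have r0 : (0 < r)%N by apply: leq_ltn_trans ir.
    by rewrite mul1r !mul0r addr0 mulfV // pnatr_eq0 -lt0n.
  have r0 : (0 < d - r)%N by rewrite subn_gt0 (leq_ltn_trans ir (ltn_ord i)).
  by rewrite mul0r mul1r mul0r add0r mulfV // pnatr_eq0 -lt0n.
split; [|split].
- rewrite (big_pairs (fun p => (F p)^t* *m F p)).
  under eq_bigr do under eq_bigr do rewrite FtF.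
  rewrite exchange_big /=.
  under eq_bigr do rewrite -scaler_suml sum_t_j scale1r.
  by rewrite -mulmx_suml -mulmx_sumr sum_delta1 mulmx1.
- rewrite (big_pairs (fun p => F p *m (F p)^t*)).
  under eq_bigr do under eq_bigr do rewrite FFt.
  under eq_bigr do rewrite -scaler_suml sum_t_i scale1r.
  exact: sum_delta1.
move=> rho tr1 hS.
set X := P *m rho *m P^t*.
have trX : \sum_(j < d) X j j = 1.
  by rewrite -tr1 -/(mxtrace X) /X mxtrace_mulC mulmxA PtP mul1mx.
have sX i : \sum_(j < d) t i j * X j j = (i < r)%N%:R * (r%:R)^-1.
  have e j : t i j * X j j = (i < r)%N%:R * (r%:R)^-1 * ((j \in S)%:R * X j j)
     + (r <= i)%N%:R * ((d - r)%:R)^-1 * ((j \notin S)%:R * X j j).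
    by rewrite /t; ring.
  rewrite (eq_bigr _ (fun j _ => e j)) big_split /= -!mulr_sumr.
  rewrite [X in _ + _ * X]big1 ?mulr0 ?addr0; last first.
    by move=> j _; case: (boolP (j \in S)) => jS /=; rewrite ?mul0r // hS // mulr0.
  rewrite (eq_bigr (fun j => X j j)) ?trX ?mulr1 //.
  by move=> j _; case: (boolP (j \in S)) => jS /=; rewrite ?mul1r // hS // mulr0.
rewrite (big_pairs (fun p => F p *m rho *m (F p)^t*)).
under eq_bigr do under eq_bigr do rewrite FrF.
under eq_bigr do rewrite -scaler_suml sX.
rewrite pid_diag scaler_sumr; apply: eq_bigr => i _.
by rewrite scalerA mulrC.
Qed.

End Chan.
From Stdlib Require Import Classical.
Section Main.
Variable C : numClosedFieldType.
Variable d : nat.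

Lemma ex_max_nat (Pn : nat -> Prop) (m0 B : nat) : Pn m0 -> (forall m, Pn m -> (m <= B)%N) ->
  exists m, Pn m /\ forall m', Pn m' -> (m' <= m)%N.
Proof.
move=> h0 hB.
suff H : forall k m, (B - m <= k)%N -> Pn m -> exists m1, Pn m1 /\ forall m', Pn m' -> (m' <= m1)%N.
  exact: (H (B - m0)%N m0 (leqnn _) h0).
elim=> [|k IH] m hk hm.
  exists m; split => // m' hm'; apply: (leq_trans (hB _ hm')).
  by rewrite -subn_eq0 -leqn0.
case: (classic (exists m', Pn m' /\ (m < m')%N)) => [[m' [hm' lt]]|hno].
  apply: (IH m' _ hm'); have := hB _ hm'; lia.
exists m; split => // m' hm'; rewrite leqNgt; apply/negP => lt.
by apply: hno; exists m'.
Qed.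

Lemma hull_density (V : 'M[C]_d -> Prop) rho :
  (forall r, V r -> density r) -> conv_hull V rho -> density rho.
Proof.
move=> hV [n [w [r [w0 [w1 [rV ->]]]]]]; split.
  by apply: psd_sum => i; apply: psd_scale => //; exact: (hV _ (rV i)).1.
rewrite tr_sum -w1; apply: eq_bigr => i _.
by rewrite mxtraceZ (hV _ (rV i)).2 mulr1.
Qed.

Lemma hull_in (V : 'M[C]_d -> Prop) rho : V rho -> conv_hull V rho.
Proof.
move=> h; exists 1%N, (fun _ => 1), (fun _ => rho); split => //; split.
  by rewrite big_ord1.
by split => //; rewrite big_ord1 scale1r.
Qed.

Lemma hull_mid (V : 'M[C]_d -> Prop) rho0 rho :
  conv_hull V rho0 -> V rho -> conv_hull V (2^-1 *: rho0 + 2^-1 *: rho).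
Proof.
move=> [n [w [r [w0 [w1 [rV ->]]]]]] hr.
pose w' (i : 'I_n.+1) := if unlift ord0 i is Some j then w j / 2 else 2^-1.
pose r' (i : 'I_n.+1) := if unlift ord0 i is Some j then r j else rho.
exists n.+1, w', r'; split.
  move=> i; rewrite /w'; case: unliftP => [j _|_]; last by rewrite invr_ge0 ler0n.
  by rewrite mulr_ge0 // invr_ge0 ler0n.
split.
  rewrite big_ord_recl /w' unlift_none.
  under eq_bigr do rewrite liftK.
  by rewrite -mulr_suml w1 mul1r; field.
split.
  by move=> i; rewrite /r'; case: unliftP.
rewrite big_ord_recl /w' /r' unlift_none addrC; congr (_ + _).
rewrite scaler_sumr; apply: eq_bigr => i _.
by rewrite !liftK scalerA mulrC.
Qed.

End Main.
Section Main2.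
Variable C : numClosedFieldType.
Variable d : nat.

Lemma ker_supp (V : 'M[C]_d -> Prop) rho0 rho :
  (forall r, V r -> density r) -> conv_hull V rho0 ->
  (forall s, conv_hull V s -> (\rank s <= \rank rho0)%N) -> V rho ->
  forall j, j \notin suppS rho0 ->
    (spectralmx rho0 *m rho *m (spectralmx rho0)^t*) j j = 0.
Proof.
move=> hV h0 hmax hr j jS.
have p0 := (hull_density hV h0).1.
have pr := (hV _ hr).1.
have [U e0 D0] := psd_decomp p0.
move: e0 D0 jS; rewrite /suppS; set P := spectralmx rho0; set D := spectral_diag rho0 => e0 D0 jS.
set sigma := 2^-1 *: rho0 + 2^-1 *: rho.
have rs := hmax _ (hull_mid h0 hr).
have h2 : 0 <= (2^-1 : C) by rewrite invr_ge0 ler0n.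
have h2' : (2^-1 : C) != 0 by rewrite invr_eq0 pnatr_eq0.
have pA : psd (2^-1 *: rho0) by apply: psd_scale.
have pB : psd (2^-1 *: rho) by apply: psd_scale.
have sub : (kermx sigma <= kermx rho0)%MS.
  apply/row_subP => i; apply/sub_kermxP.
  have h : row i (kermx sigma) *m sigma = 0.
    by rewrite -row_mul (sub_kermxP (submx_refl _)) row0.
  have := psd_ker_add pA pB h; rewrite -scalemxAr => /eqP.
  by rewrite scaler_eq0 (negbTE h2') => /eqP.
have sup : (kermx rho0 <= kermx sigma)%MS.
  have [le e] := mxrank_leqif_sup sub.
  by rewrite -e eqn_leq le /= !mxrank_ker leq_sub2l.
set f := row j P.
have f0 : f *m rho0 = 0.
  have e1 : P *m rho0 = diag_mx D *m P by rewrite e0 !mulmxA (unitarymxP U) mul1mx.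
  rewrite /f -row_mul e1 row_mul row_diag_mx.
  by move: jS; rewrite inE negbK => /eqP ->; rewrite scale0r mul0mx.
have fs : f *m (2^-1 *: rho + 2^-1 *: rho0) = 0.
  by rewrite addrC; apply/sub_kermxP; apply: submx_trans sup; apply/sub_kermxP.
have := psd_ker_add pB pA fs; rewrite -scalemxAr => /eqP.
rewrite scaler_eq0 (negbTE h2') /= => /eqP fr.
transitivity ((row j (P *m rho *m P^t*)) 0 j); first by rewrite [RHS]mxE.
by rewrite !row_mul -/f fr mul0mx mxE.
Qed.

Lemma kraus_hull (V : 'M[C]_d -> Prop) rho0 n (K : 'I_n -> 'M[C]_d) (c : 'M[C]_d) :
  conv_hull V rho0 ->
  (forall r, V r -> \sum_(i < n) (K i *m r *m (K i)^t*) = c) ->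
  \sum_(i < n) (K i *m rho0 *m (K i)^t*) = c.
Proof.
move=> [m [w [r [w0 [w1 [rV ->]]]]]] hE.
under eq_bigr do rewrite mulmx_sumr mulmx_suml.
rewrite exchange_big /=.
under eq_bigr do under eq_bigr do rewrite -scalemxAr -scalemxAl.
under eq_bigr do rewrite -scaler_sumr hE //.
by rewrite -scaler_suml w1 scale1r.
Qed.

End Main2.
From Stdlib Require Import Reals Lra.

Lemma log2_le (a b : nat) : leq 1 a -> leq a b -> Rle (log2 (INR a)) (log2 (INR b)).
Proof.
move=> /ssrnat.leP ha /ssrnat.leP hab; unfold log2, Rdiv.
apply: Rmult_le_compat_r.
  left; apply: Rinv_0_lt_compat; rewrite -ln_1; apply: ln_increasing; lra.
have hlt : Rlt 0 (INR a) by apply: lt_0_INR; lia.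
have hle : Rle (INR a) (INR b) by apply: le_INR; lia.
case: hle => [hl|->]; [left; exact: ln_increasing | exact: Rle_refl].
Qed.

Lemma rank_pos (C : numClosedFieldType) (d : nat) (rho : 'M[C]_d) :
  density rho -> leq 1 (\rank rho).
Proof.
move=> [_ t1]; rewrite lt0n mxrank_eq0; apply/eqP => z.
by move: t1; rewrite z mxtrace0 => /eqP; rewrite eq_sym oner_eq0.
Qed.


Close Scope sesquilinear_scope.
Close Scope ring_scope.

Theorem mainTheorem13 (C : numClosedFieldType) (d : nat) (hd : (0 < d)%N)
  (V : 'M[C]_d -> Prop) (hV : spec V) :
  exists rho0 : 'M[C]_d,
    conv_hull V rho0 /\
    (forall rho, conv_hull V rho -> Rle (H0 rho) (H0 rho0)) /\
    is_lub (yield_set V) (Rminus (log2 (INR d)) (H0 rho0)).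
Proof.
Open Scope ring_scope. Open Scope sesquilinear_scope.
have hVd : forall r, V r -> density r := hV.1.
have [rho1 h1] := hV.2.
have hB : forall m, (exists rho, conv_hull V rho /\ \rank rho = m) -> leq m d.
  by move=> m' [rho [_ <-]]; exact: rank_leq_row.
have hI : exists rho, conv_hull V rho /\ \rank rho = \rank rho1.
  by exists rho1; split => //; exact: hull_in.
have [m [[rho0 [h0 em]] hm]] := ex_max_nat hI hB.
subst m.
have hmax : forall s, conv_hull V s -> leq (\rank s) (\rank rho0).
  by move=> s hs; apply: hm; exists s.
have d0 := hull_density hVd h0.
have p0 := d0.1.
have r1 := rank_pos d0.
have rd : leq (\rank rho0) d := rank_leq_row rho0.
exists rho0; split => //; split.
  move=> rho hr; apply: log2_le; [exact: rank_pos (hull_density hVd hr) | exact: hmax].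
split.
  move=> y [c [hc [[E [[n [K [hTP [hU hEK]]]] hconv]] ->]]].
  case: c hc hconv => [k|] hc hconv /=.
    move: hc => /andP [k1 kd].
    have hk : leq (\rank rho0) k.
      apply: (upper_rank p0 kd hTP hU); apply: (kraus_hull h0) => r hr.
      by rewrite -hEK; exact: hconv r hr.
    have := log2_le r1 hk; unfold H0; lra.
  have := log2_le r1 rd; unfold H0; lra.
move=> b hb; apply: hb.
exists (CurK (\rank rho0)); split; first by rewrite /= r1 rd.
split; last by [].
have [n [K [hTP [hU hE]]]] := channel (suppS rho0) (spectral_unitarymx rho0).
exists (fun rho => (\sum_(i < n) (K i *m rho *m (K i)^t*))%R); split.
  by exists n, K; split => //; split.
move=> rho hr /=; rewrite /Pi (psd_rank p0) hE //; first exact: (hVd _ hr).2.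
by move=> j hj; apply: (ker_supp hVd h0 hmax hr hj).
Qed.
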